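(* With $\mathbb P$-probability one, the sequence of probability measures $Q_t^\omega$, $t=1,2,\dots$, on $\mathbb R^{N^2+N}$ is exponentially tight, i.e., for every $M<\infty$ there is a compact $K\subseteq\mathbb R^{N^2+N}$ with $\limsup_{t\to\infty}\frac1t\log Q_t^\omega(K^c)\le-M$.
   Context: $V=\{1,\dots,N\}$; $P$ row-stochastic irreducible aperiodic with stationary distribution $\pi>0$. $\mathcal S^t=\{s^t\in V^t:\pi_{s_1}\prod_{k<t}P_{s_ks_{k+1}}>0\}$, $C_t=|\mathcal S^t|$. $K_{ij}(s^t)=|\{1\le k\le t:s_k=i,s_{k+1}=j\}|$ with $s_{t+1}:=s_1$, $\Theta_t(s^t)=K(s^t)/t$. On $(\Omega,\mathcal F,\mathbb P)$, for each $t$ and $s^t\in\mathcal S^t$, $Z_{s^t}\in\mathbb R^t$ has i.i.d. $\mathcal N(0,1)$ entries, all these vectors (over all $s^t$, all $t$) mutually independent. $\mathcal Z^\omega_{t,i}(s^t)=\frac1t\sum_{k\le t:s_k=i}Z_{s^t,k}(\omega)$ ($0$ if the sum is empty). $Q_t^\omega(B)=\frac1{C_t}|\{s^t\in\mathcal S^t:(\Theta_t(s^t),\mathcal Z_t^\omega(s^t))\in B\}|$. *)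

(* Defs.v *)
From HB Require Import structures.
From mathcomp Require Import all_boot all_order all_algebra.
From mathcomp Require Import all_classical all_reals all_analysis.
Set Implicit Arguments. Unset Strict Implicit. Unset Printing Implicit Defensive.
Import Order.TTheory GRing.Theory Num.Theory.
Import numFieldNormedType.Exports.
Local Open Scope classical_set_scope.
Local Open Scope ring_scope.

Definition mxpow (R : realType) (N : nat) (A : 'M[R]_N) (m : nat) : 'M[R]_N :=
  iter m (mulmx A) 1%:M.

Definition row_stochastic (R : realType) (N : nat) (P : 'M[R]_N) : Prop :=
  (forall i j, 0 <= P i j) /\ (forall i, \sum_(j < N) P i j = 1).

Definition irreducible_mx (R : realType) (N : nat) (P : 'M[R]_N) : Prop :=
  forall i j : 'I_N, exists m : nat, 0 < mxpow P m i j.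

Definition aperiodic_mx (R : realType) (N : nat) (P : 'M[R]_N) : Prop :=
  forall (i : 'I_N) (d : nat), (forall m, 0 < mxpow P m i i -> (d %| m)%N) -> d = 1%N.

Definition stationary_distribution (R : realType) (N : nat) (P : 'M[R]_N)
  (pi : 'rV[R]_N) : Prop :=
  (forall i, 0 <= pi 0 i) /\ \sum_(i < N) pi 0 i = 1 /\ pi *m P = pi.

Definition admissible (R : realType) (N : nat) (P : 'M[R]_N) (pi : 'rV[R]_N)
  (s : seq 'I_N) : bool :=
  match s with
  | [::] => false
  | x :: s' => 0 < pi 0 x * \prod_(k < size s') P (nth x s k) (nth x s k.+1)
  end.

Definition Sset (R : realType) (N t : nat) (P : 'M[R]_N) (pi : 'rV[R]_N)
  : {set t.-tuple 'I_N} := [set s : t.-tuple 'I_N | admissible P pi s].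

Definition Ccard (R : realType) (N t : nat) (P : 'M[R]_N) (pi : 'rV[R]_N) : nat :=
  #|Sset t P pi|.

(* K_ij(s) with cyclic convention s_{t+1} = s_1 *)
Definition Kcount (N t : nat) (s : t.-tuple 'I_N) (i j : 'I_N) : nat :=
  \sum_(k < t) ((tnth s k == i) && (tnth s (ordS k) == j)).

Definition Theta (R : realType) (N t : nat) (s : t.-tuple 'I_N) : 'M[R]_N :=
  \matrix_(i, j) ((Kcount s i j)%:R / t%:R).

(* index set of the Gaussian family: (t, s^t, k) *)
Definition Idx (N : nat) := {t : nat & (t.-tuple 'I_N * 'I_t)%type}.

Definition mkIdx (N t : nat) (s : t.-tuple 'I_N) (k : 'I_t) : Idx N :=
  existT _ t (s, k).

Definition valid_idx (R : realType) (N : nat) (P : 'M[R]_N) (pi : 'rV[R]_N)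
  : set (Idx N) := fun i => admissible P pi (tval (tagged i).1).

Definition Zemp (R : realType) (N : nat) (Omega : Type) (Z : Idx N -> Omega -> R)
  (t : nat) (w : Omega) (s : t.-tuple 'I_N) : 'rV[R]_N :=
  \row_i (t%:R^-1 * \sum_(k < t | tnth s k == i) Z (mkIdx s k) w).

(* Q^omega_t(B) on R^{N^2+N} = 'M_N * 'rV_N *)
Definition Qt (R : realType) (N : nat) (P : 'M[R]_N) (pi : 'rV[R]_N)
  (Omega : Type) (Z : Idx N -> Omega -> R) (t : nat) (w : Omega)
  (B : set ('M[R]_N * 'rV[R]_N)) : R :=
  (#|[set s in Sset t P pi | `[< B (Theta R s, Zemp Z w s) >] ]|)%:R
    / (Ccard t P pi)%:R.

Definition log_rate (R : realType) (t : nat) (x : R) : \bar R :=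
  if x == 0 then -oo%E else ((ln x) / t%:R)%:E.

Definition mutually_independent (d : measure_display) (T : measurableType d)
  (R : realType) (Pr : probability T R) (I : eqType) (D : set I)
  (X : I -> T -> R) : Prop :=
  forall (J : seq I), uniq J -> (forall i, i \in J -> D i) ->
  forall B : I -> set R, (forall i, measurable (B i)) ->
  Pr (\big[setI/setT]_(i <- J) (X i @^-1` B i)) =
    (\prod_(i <- J) Pr (X i @^-1` B i))%E.

Definition std_normal (d : measure_display) (T : measurableType d)
  (R : realType) (Pr : probability T R) (X : T -> R) : Prop :=
  measurable_fun setT X /\
  forall B : set R, measurable B -> Pr (X @^-1` B) = normal_prob 0 1 B.

(* Main.v *)
Require Import Defs.
From HB Require Import structures.
From mathcomp Require Import all_boot all_order all_algebra.
From mathcomp Require Import all_classical all_reals all_analysis.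
From mathcomp Require Import ring lra measurable_realfun.
Set Implicit Arguments. Unset Strict Implicit. Unset Printing Implicit Defensive.
Import Order.TTheory GRing.Theory Num.Theory.
Import numFieldNormedType.Exports.
Local Open Scope classical_set_scope.
Local Open Scope ring_scope.
Section comb.
Variable R : realType.

Lemma geom2 n : \sum_(k < n) ((2:R)^-1)^+k <= 2.
Proof.
elim: n => [|n IH]; first by rewrite big_ord0.
rewrite big_ord_recl expr0.
under eq_bigr do rewrite /bump /= exprS.
rewrite -big_distrr /=.
have h : 0 <= (2:R)^-1 by [].
have := ler_wpM2l h IH; lra.
Qed.

Lemma expN_half (a : nat) : expR (- (a%:R : R)) <= (2^-1)^+a.
Proof.
rewrite -mulrN1 expRM_natl; apply: lerXn2r; rewrite ?nnegrE ?expR_ge0 //.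
rewrite expRN lef_pV2 ?posrE ?expR_gt0 //.
have := expR_ge1Dx (1:R); lra.
Qed.

End comb.
Section comb2.
Variable R : realType.

Lemma comb_bound (c : R) t m : 0 <= c ->
  \sum_(a : {ffun 'I_t -> 'I_m.+1} | (m <= \sum_k a k)%N)
     \prod_k (c * expR (- (2 * (a k)%:R))) <= expR (- m%:R) * (2 * c) ^+ t.
Proof.
move=> c0.
apply: (@le_trans _ _ (\sum_(a : {ffun 'I_t -> 'I_m.+1} | (m <= \sum_k a k)%N)
     (expR (- m%:R) * \prod_k (c * ((2:R)^-1)^+(a k))))).
  apply: ler_sum => a ha.
  have e : \prod_k (c * expR (- (2 * (a k)%:R))) =
      \prod_k expR (- ((a k)%:R : R)) * \prod_k (c * expR (- (a k)%:R)).
    rewrite -big_split /=; apply: eq_bigr => k _.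
    rewrite mulrCA -expRD; congr (_ * expR _); lra.
  rewrite e; apply: ler_pM.
  - by apply: prodr_ge0 => k _; exact: expR_ge0.
  - by apply: prodr_ge0 => k _; rewrite mulr_ge0 ?expR_ge0.
  - rewrite -expR_sum sumrN -natr_sum ler_expR lerN2 ler_nat; exact: ha.
  - apply: ler_prod => k _; rewrite mulr_ge0 ?expR_ge0 //=.
    by rewrite ler_wpM2l // expN_half.
rewrite -big_distrr /= ler_wpM2l ?expR_ge0 //.
apply: (@le_trans _ _ (\sum_(a : {ffun 'I_t -> 'I_m.+1}) \prod_k (c * ((2:R)^-1)^+(a k)))).
  rewrite [X in _ <= X](bigID (fun a : {ffun 'I_t -> 'I_m.+1} => (m <= \sum_k a k)%N)) /=.
  rewrite lerDl; apply: sumr_ge0 => a _; apply: prodr_ge0 => k _.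
  by rewrite mulr_ge0 // exprn_ge0.
rewrite -(bigA_distr_bigA (fun (k : 'I_t) (n : 'I_m.+1) => c * ((2:R)^-1)^+n)) /=.
have -> : (2 * c) ^+ t = \prod_(k < t) (2 * c) by rewrite prodr_const card_ord.
apply: ler_prod => k _; rewrite sumr_ge0 /=; last first.
  by move=> n _; rewrite mulr_ge0 // exprn_ge0.
rewrite -big_distrr /= mulrC ler_wpM2r //.
have := geom2 R m.+1; congr (_ <= _).
Qed.

End comb2.
Section tail.
Variable R : realType.

Definition Cg : R := expR 4 * normal_peak (1:R) / normal_peak (Num.sqrt (2:R)).

Lemma Cg_ge0 : 0 <= Cg.
Proof. by rewrite /Cg !mulr_ge0 ?invr_ge0 ?normal_peak_ge0 ?expR_ge0. Qed.

Lemma mtail (a : R) : measurable [set x : R | a <= `|x|].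
Proof.
rewrite (_ : [set x : R | a <= `|x|] = (fun x : R => `|x|) @^-1` [set` `[a, +oo[%R]); last first.
  by apply/seteqP; split => x /=; rewrite in_itv /= andbT.
by rewrite -[X in measurable X]setTI; apply: measurable_realfun.normr_measurable => //.
Qed.

Lemma aux (p1 ps e1 e2 e3 : R) : ps != 0 ->
  e1 * p1 / ps * e2 * (ps * e3) = p1 * (e1 * e2 * e3).
Proof. by move=> h; field. Qed.

Lemma ineq (a y : R) : a <= y -> 0 <= y ->
  - y ^+ 2 / 2 <= 4 - 2 * a + - y ^+ 2 / (2 *+ 2).
Proof.
move=> ay y0; have k : 0 <= (y - 4) ^+ 2 by rewrite sqr_ge0.
have e : (2 *+ 2 : R) = 4 by rewrite -mulr_natr; lra.
rewrite e; move: k; rewrite sqrrB; lra.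
Qed.

Lemma gauss_tail (a : R) : 0 <= a ->
  (normal_prob 0 1 [set x : R | (a <= `|x|)%R] <= (Cg * expR (- (2 * a)))%:E)%E.
Proof.
move=> a0.
have s0 : Num.sqrt (2:R) != 0 by rewrite sqrtr_eq0 -ltNge.
have p0 : normal_peak (Num.sqrt (2:R)) != 0 by rewrite gt_eqF // normal_peak_gt0.
have c0 : 0 <= Cg * expR (- (2 * a)) by rewrite mulr_ge0 ?Cg_ge0 ?expR_ge0.
rewrite /normal_prob.
set I2 := (\int[lebesgue_measure]_(x in [set x : R | (a <= `|x|)%R])
   ((Cg * expR (- (2 * a)))%:E * (normal_pdf 0 (Num.sqrt 2) x)%:E))%E.
have H : (\int[lebesgue_measure]_(x in [set x : R | (a <= `|x|)%R]) (normal_pdf 0 1 x)%:E <= I2)%E.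
  apply: ge0_le_integral => //.
  - exact: mtail.
  - by move=> x _; rewrite lee_fin normal_pdf_ge0.
  - apply/measurable_EFinP; apply: measurable_funTS; exact: measurable_normal_pdf.
  - apply: measurable_funTS; apply/measurable_EFinP.
    by apply: measurable_funM => //; exact: measurable_normal_pdf.
  move=> x /= ax; rewrite -EFinM lee_fin.
  rewrite !normal_pdfE ?oner_neq0 // /normal_fun /Cg.
  rewrite sqr_sqrtr // !subr0 expr1n.
  set p1 := normal_peak 1; set ps := normal_peak (Num.sqrt 2).
  have -> : expR 4 * p1 / ps * expR (- (2 * a)) * (ps * expR (- x ^+ 2 / (2 *+ 2)))
      = p1 * expR (4 + - (2 * a) + - x ^+ 2 / (2 *+ 2)).
    by rewrite !expRD aux.
  rewrite ler_wpM2l ?normal_peak_ge0 // ler_expR.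
  have hx : x ^+ 2 = `|x| ^+ 2 by rewrite -normrX ger0_norm // sqr_ge0.
  by rewrite hx; exact: (ineq ax (normr_ge0 x)).
apply: (@le_trans _ _ I2 _ _ H); rewrite /I2.
rewrite ge0_integralZl_EFin //; last 3 first.
- exact: mtail.
- by move=> x _; rewrite lee_fin normal_pdf_ge0.
- apply/measurable_EFinP; apply: measurable_funTS; exact: measurable_normal_pdf.
have cg0 : 0 < Cg * expR (- (2 * a)).
  have h1 : 0 < normal_peak (1:R) by apply: normal_peak_gt0; exact: oner_neq0.
  have h2 : 0 < normal_peak (Num.sqrt (2:R)) by apply: normal_peak_gt0.
  apply: mulr_gt0; last exact: expR_gt0.
  rewrite /Cg; apply: divr_gt0 => //; apply: mulr_gt0 => //; exact: expR_gt0.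
rewrite -[X in (_ <= X)%E]mule1 lee_pmul2l ?lte_fin //.
apply: (@le_trans _ _ (\int[lebesgue_measure]_(x in setT) (normal_pdf 0 (Num.sqrt 2) x)%:E)%E).
  apply: ge0_subset_integral => //; first exact: mtail.
  - apply/measurable_EFinP; exact: measurable_normal_pdf.
  - by move=> x _; rewrite lee_fin normal_pdf_ge0.
by rewrite integral_normal_pdf.
Qed.
End tail.
Section det.
Variable R : realType.

Definition Box n (c : R) : set 'rV[R]_n := [set v | forall j, `[-c, c]%classic (v ord0 j)].
Arguments Box : clear implicits.

Definition Kset N (L : nat) : set ('M[R]_N * 'rV[R]_N) :=
  (@vec_mx R N N @` Box (N * N)%N 1) `*` Box N (L.+1)%:R.
Arguments Kset : clear implicits.

Lemma Box_compact n c : compact (Box n c).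
Proof. by apply: (@rV_compact R n (fun _ => `[-c, c]%classic)) => _; exact: segment_compact. Qed.

Lemma vec_mx_cont N : continuous (@vec_mx R N N).
Proof.
move=> v.
have h := @cvg_ballP R _ _ _ (nbhs_filter v) (@vec_mx R N N) (vec_mx v).
apply/h => e e0; apply/nbhs_ballP; exists e => // u [_ hu].
split => // i j; rewrite !mxE; exact: hu.
Qed.

Lemma Kcompact N L : compact (Kset N L).
Proof.
apply: compact_setX; last exact: Box_compact.
apply: continuous_compact; last exact: Box_compact.
apply: continuous_subspaceT; exact: vec_mx_cont.
Qed.

Lemma Kcount_le N t (s : t.-tuple 'I_N) i j : (Kcount s i j <= t)%N.
Proof.
rewrite /Kcount; apply: (@leq_trans (\sum_(k < t) 1)%N).
  by apply: leq_sum => k _; case: (_ && _).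
by rewrite sum_nat_const card_ord muln1.
Qed.

Lemma Theta_in N t (s : t.-tuple 'I_N) : (@vec_mx R N N @` Box (N * N)%N 1) (Theta R s).
Proof.
exists (mxvec (Theta R s)); last exact: mxvecK.
move=> k; case/mxvec_indexP: k => i j.
rewrite mxvecE mxE /= in_itv /= -ler_norml ger0_norm ?divr_ge0 //.
have [t0|tp] := eqVneq (t%:R : R) 0; first by rewrite t0 invr0 mulr0.
have tp' : (0 : R) < t%:R by rewrite lt_def tp ler0n.
rewrite ler_pdivrMr // mul1r ler_nat; exact: Kcount_le.
Qed.

End det.
Section meas.
Context (R : realType) (N : nat) (P : 'M[R]_N) (pi : 'rV[R]_N)
  (d : measure_display) (Omega : measurableType d) (Pr : probability Omega R)
  (Z : Idx N -> Omega -> R).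
Hypothesis HZ : forall i, valid_idx P pi i -> std_normal Pr (Z i).
Hypothesis Hind : mutually_independent Pr (valid_idx P pi) Z.

Definition Bset (a : nat) : set R := [set x | (a%:R <= `|x|)%R].
Definition Jseq t (s : t.-tuple 'I_N) : seq (Idx N) := [seq mkIdx s k | k <- enum 'I_t].
Definition gfun t m (a : {ffun 'I_t -> 'I_m}) (i : Idx N) : nat :=
  nth 0%N [seq (a k : nat) | k <- enum 'I_t] (tagged i).2.

Definition Ev (L t : nat) (s : t.-tuple 'I_N) : set Omega :=
  \big[setU/set0]_(a : {ffun 'I_t -> 'I_(L * t).+1} | (L * t <= \sum_k a k)%N)
    \big[setI/setT]_(i <- Jseq s) (Z i @^-1` Bset (gfun a i)).

Definition Fv (L t : nat) : set Omega :=
  \big[setU/set0]_(s in Sset t P pi) Ev L s.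

Lemma gfunE t m (a : {ffun 'I_t -> 'I_m}) (s : t.-tuple 'I_N) k :
  gfun a (mkIdx s k) = a k.
Proof. by rewrite /gfun /mkIdx /= (nth_map k) ?size_enum_ord // nth_ord_enum. Qed.

Lemma Jseq_valid t (s : t.-tuple 'I_N) : s \in Sset t P pi ->
  forall i, i \in Jseq s -> valid_idx P pi i.
Proof. by move=> sS i /mapP [k _ ->]; move: sS; rewrite inE. Qed.

Lemma Jseq_uniq t (s : t.-tuple 'I_N) : uniq (Jseq s).
Proof.
rewrite map_inj_uniq ?enum_uniq // => k1 k2.
move/(congr1 (fun i : Idx N => nat_of_ord (tagged i).2)) => /= h.
exact: val_inj.
Qed.

Lemma mpre i B : valid_idx P pi i -> measurable B -> measurable (Z i @^-1` B).
Proof.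
move=> v mB; rewrite -[X in measurable X]setTI.
by apply: (HZ v).1 => //.
Qed.

Lemma mBset a : measurable (Bset a).
Proof. exact: mtail. Qed.

Lemma PrZ i a : valid_idx P pi i ->
  (Pr (Z i @^-1` Bset a) <= (Cg R * expR (- (2 * a%:R)))%:E)%E.
Proof.
move=> v; rewrite (HZ v).2; last exact: mBset.
exact: (gauss_tail (ler0n R a)).
Qed.

Lemma mu_bigU (I : Type) (r : seq I) (Q : pred I) (F : I -> set Omega) :
  (forall i, Q i -> measurable (F i)) ->
  (Pr (\big[setU/set0]_(i <- r | Q i) F i) <= \sum_(i <- r | Q i) Pr (F i))%E.
Proof.
move=> mF; elim: r => [|x r IH]; first by rewrite !big_nil measure0.
rewrite !big_cons; case: ifP => Qx //.
apply: le_trans (measureU2 _ _ _) _; first exact: mF.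
  exact: bigsetU_measurable.
exact: leeD.
Qed.

Lemma lee_prod_seq (I : eqType) (r : seq I) (f g : I -> \bar R) :
  (forall i, (0 <= f i)%E) -> (forall i, i \in r -> (f i <= g i)%E) ->
  (\prod_(i <- r) f i <= \prod_(i <- r) g i)%E.
Proof.
move=> f0; elim: r => [|x r IH] fg; first by rewrite !big_nil.
rewrite !big_cons; apply: lee_pmul => //.
- by apply: prode_ge0.
- by apply: fg; rewrite mem_head.
by apply: IH => i ir; apply: fg; rewrite in_cons ir orbT.
Qed.

Lemma meas_Ev L t (s : t.-tuple 'I_N) : s \in Sset t P pi -> measurable (Ev L s).
Proof.
move=> sS; apply: bigsetU_measurable => a _; rewrite big_seq.
apply: bigsetI_measurable => i iJ; apply: mpre; last exact: mBset.
exact: Jseq_valid iJ.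
Qed.

Lemma Pr_Ev L t (s : t.-tuple 'I_N) : s \in Sset t P pi ->
  (Pr (Ev L s) <= (expR (- (L * t)%:R) * (2 * Cg R) ^+ t)%:E)%E.
Proof.
move=> sS.
apply: le_trans.
  apply: mu_bigU => a _; rewrite big_seq; apply: bigsetI_measurable => i iJ.
  by apply: mpre; [exact: Jseq_valid iJ|exact: mBset].
apply: (@le_trans _ _ ((\sum_(a : {ffun 'I_t -> 'I_(L * t).+1} | (L * t <= \sum_k a k)%N)
     \prod_k (Cg R * expR (- (2 * (a k)%:R))))%:E)); last first.
  by rewrite lee_fin; apply: comb_bound; exact: Cg_ge0.
rewrite -sumEFin; apply: lee_sum => a _.
rewrite Hind; first last.
- by move=> i; exact: mBset.
- exact: Jseq_valid.
- exact: Jseq_uniq.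
apply: le_trans (lee_prod_seq (g := fun i => (Cg R * expR (- (2 * (gfun a i)%:R)))%:E) _ _) _.
- by move=> i; exact: measure_ge0.
- by move=> i iJ; apply: PrZ; exact: Jseq_valid iJ.
rewrite prodEFin lee_fin /Jseq big_map.
under eq_bigr do rewrite gfunE.
by rewrite big_enum /=.
Qed.


Lemma Pr_Fv L t :
  (Pr (Fv L t) <= ((N%:R) ^+ t * (expR (- (L * t)%:R) * (2 * Cg R) ^+ t))%:E)%E.
Proof.
apply: le_trans.
  by apply: mu_bigU => s sS; exact: meas_Ev.
apply: (@le_trans _ _ (\sum_(s in Sset t P pi) (expR (- (L * t)%:R) * (2 * Cg R) ^+ t)%:E)%E).
  by apply: lee_sum => s sS; exact: Pr_Ev.
rewrite sumEFin sumr_const lee_fin -natrX mulr_natl.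
have hc : (#|Sset t P pi| <= N ^ t)%N.
  by have := max_card (Sset t P pi); rewrite card_tuple card_ord.
rewrite -(subnK hc) natrD mulrDl [X in _ + X]mulr_natl lerDr.
apply: mulr_ge0 => //; apply: mulr_ge0; first exact: expR_ge0.
by apply: exprn_ge0; apply: mulrn_wge0; exact: Cg_ge0.
Qed.

Lemma Fv0 L : Fv L 0 = set0.
Proof.
rewrite /Fv big_pred0 // => s; rewrite inE.
by case: s => -[|x r] //.
Qed.

Lemma bigU_mem (I : eqType) (r : seq I) (Q : pred I) (F : I -> set Omega) i x :
  i \in r -> Q i -> F i x -> (\big[setU/set0]_(j <- r | Q j) F j) x.
Proof.
elim: r => [|y r IH]; first by rewrite in_nil.
rewrite big_cons in_cons => /orP [/eqP <-|ir] Qi Fx.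
  by rewrite Qi; left.
by case: ifP => _; [right|]; exact: IH.
Qed.

Lemma bigI_mem (I : eqType) (r : seq I) (F : I -> set Omega) x :
  (forall i, i \in r -> F i x) -> (\big[setI/setT]_(j <- r) F j) x.
Proof.
elim: r => [|y r IH] H; first by rewrite big_nil.
rewrite big_cons; split.
  by apply: H; rewrite mem_head.
by apply: IH => i ir; apply: H; rewrite in_cons ir orbT.
Qed.

Lemma Zemp_in L t (s : t.-tuple 'I_N) w : ~ Ev L s w ->
  @Box R N (L.+1)%:R (Zemp Z w s).
Proof.
move=> nE j; rewrite /= in_itv /= -ler_norml leNgt; apply/negP => hgt; apply: nE.
set z := fun k : 'I_t => Z (mkIdx s k) w.
have hS : ((L.+1 * t)%N%:R : R) < \sum_k `|z k|.
  move: hgt; rewrite /Zemp mxE.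
  have [t0|tp] := eqVneq (t%:R : R) 0.
    by rewrite t0 invr0 mul0r normr0 ltNge ler0n.
  have tp' : (0 : R) < t%:R by rewrite lt_def tp ler0n.
  rewrite normrM ger0_norm ?invr_ge0 ?ler0n // -ltr_pdivrMl ?invr_gt0 // invrK.
  rewrite natrM mulrC => h; apply: (lt_le_trans h).
  apply: le_trans (ler_norm_sum _ _ _) _.
  rewrite [X in _ <= X](bigID (fun k => tnth s k == j)) /= lerDl.
  by apply: sumr_ge0 => k _.
pose a : {ffun 'I_t -> 'I_(L * t).+1} := [ffun k => inord (minn (Num.trunc `|z k|) (L * t))].
have aE k : (a k : nat) = minn (Num.trunc `|z k|) (L * t).
  by rewrite ffunE inordK // ltnS geq_minr.
apply: (@bigU_mem _ _ _ _ a) => //; first exact: mem_index_enum.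
  case: (boolP [exists k, L * t <= Num.trunc `|z k|]%N).
    move/existsP => [k hk]; rewrite (bigD1 k) //= aE (minn_idPr hk).
    exact: leq_addr.
  rewrite negb_exists => /forallP hk.
  have aE' k : (a k : nat) = Num.trunc `|z k|.
    rewrite aE; apply/minn_idPl; apply: ltnW; rewrite ltnNge; exact: hk.
  have h2 : \sum_k `|z k| <= ((\sum_k a k)%N%:R : R) + t%:R.
    have -> : (t%:R : R) = \sum_(k < t) (1:R) by rewrite sumr_const card_ord.
    rewrite natr_sum -big_split /=.
    apply: ler_sum => k _; rewrite aE'.
    have := truncn_itv (normr_ge0 (z k)); case/andP => _ /ltW.
    by rewrite -natr1.
  have h3 := lt_le_trans hS h2.
  move: h3; rewrite mulSn natrD => h3.
  have : ((L * t)%N%:R : R) < (\sum_k a k)%N%:R by lra.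
  by rewrite ltr_nat => /ltnW.
apply: bigI_mem => i /mapP [k _ ->].
rewrite /preimage /Bset /= gfunE aE.
apply: le_trans (_ : (Num.trunc `|z k|)%:R <= _).
  by rewrite ler_nat geq_minl.
by rewrite truncn_le.
Qed.


Lemma exL (c : R) : 0 <= c -> exists L : nat, c * expR (- L%:R) <= 4^-1.
Proof.
move=> c0; exists (Num.trunc (4 * c)).+1.
have h4 : (0:R) <= 4 * c by rewrite mulr_ge0.
have h1 : 4 * c < (Num.trunc (4 * c)).+1%:R by case/andP: (truncn_itv h4).
move: h1; set L := (Num.trunc (4 * c)).+1 => h1.
have h2 := expR_ge1Dx (L%:R : R).
rewrite expRN ler_pdivrMr ?expR_gt0 //.
lra.
Qed.

Lemma PrF_quarter L t : N%:R * expR (- L%:R) * (2 * Cg R) <= 4^-1 ->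
  (Pr (Fv L t) <= (((4:R)^-1) ^+ t)%:E)%E.
Proof.
move=> hL; apply: le_trans (Pr_Fv L t) _; rewrite lee_fin.
have -> : expR (- (L * t)%:R) = expR (- (L%:R : R)) ^+ t.
  by rewrite natrM -mulNr expRM_natr.
rewrite mulrA -!exprMn; apply: lerXn2r; rewrite ?nnegrE //.
  apply: mulr_ge0; first by apply: mulr_ge0 => //; exact: expR_ge0.
  by apply: mulr_ge0 => //; exact: Cg_ge0.
Qed.

Lemma quarter_half k : ((4:R)^-1) ^+ k <= 2 / (2 ^ (k + 1))%:R.
Proof.
rewrite addn1 expnS natrM natrX invfM mulrA divff // mul1r -exprVn.
by apply: lerXn2r; rewrite ?nnegrE //; lra.
Qed.

Lemma sum_finite L : N%:R * expR (- L%:R) * (2 * Cg R) <= 4^-1 ->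
  (\sum_(n <oo) Pr (Fv L n) < +oo)%E.
Proof.
move=> hL.
apply: le_lt_trans (lee_nneseries (v := fun k => ((2:R) / (2 ^ (k + 1))%:R)%:E) _ _) _.
- by move=> i _ _; exact: measure_ge0.
- move=> n _; apply: le_trans (PrF_quarter _ hL) _; rewrite lee_fin.
  exact: quarter_half.
rewrite (_ : (\sum_(n <oo) _)%E = (2 / 2 ^+ 0)%:E); first by rewrite ltry.
by apply: cvg_lim => //; exact: (@cvg_geometric_eseries_half R 2 0).
Qed.

Lemma main_ae : {ae Pr, forall w : Omega,
    forall M : R, exists K : set ('M[R]_N * 'rV[R]_N),
      compact K /\
      (limn_esup (fun t => log_rate t (Qt P pi Z t w (~` K))) <= (- M)%:E)%E}.
Proof.
have c0 : 0 <= N%:R * (2 * Cg R).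
  by apply: mulr_ge0 => //; apply: mulr_ge0 => //; exact: Cg_ge0.
have [L hL] := exL c0.
have hL' : N%:R * expR (- L%:R) * (2 * Cg R) <= 4^-1 by rewrite mulrAC.
have mF k : measurable (Fv L k).
  by apply: bigsetU_measurable => s sS; exact: meas_Ev.
have H0 : Pr (lim_sup_set (Fv L)) = 0.
  by apply: lim_sup_set_cvg0 => //; exact: sum_finite.
exists (lim_sup_set (Fv L)); split => //.
  apply: bigcap_measurable => // k _; apply: bigcup_measurable => j _; exact: mF.
move=> w /= nP; apply: contrapT => nA; apply: nP => M.
move: nA; rewrite /lim_sup_set => /existsNP [n hn].
have hF j : (n <= j)%N -> ~ Fv L j w.
  by move=> nj Fj; apply: hn => _; exists j.
exists (@Kset R N L); split; first exact: Kcompact.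
rewrite (cvgNy_limn_einf_sup _).2 ?leNye //.
apply/cvgeNyPle => A; exists n => // t /= nt.
rewrite /log_rate /Qt.
rewrite (_ : #|_| = 0%N) ?mul0r ?eqxx ?leNye //.
apply/eqP; rewrite cards_eq0; apply/eqP/setP => s; rewrite !inE.
apply/negbTE/negP => /andP [sS /asboolP hK]; apply: hK.
split; first exact: Theta_in.
apply: Zemp_in => hE; apply: (hF t nt).
rewrite /Fv; apply: bigU_mem hE; [exact: mem_index_enum | by rewrite inE].
Qed.

End meas.

Theorem lemma7 (R : realType) (N : nat) (P : 'M[R]_N) (pi : 'rV[R]_N)
  (HP : row_stochastic P) (Hirr : irreducible_mx P) (Hap : aperiodic_mx P)
  (Hpi : stationary_distribution P pi) (Hpos : forall i, 0 < pi 0 i)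
  (d : measure_display) (Omega : measurableType d) (Pr : probability Omega R)
  (Z : Idx N -> Omega -> R)
  (HZ : forall i, valid_idx P pi i -> std_normal Pr (Z i))
  (Hind : mutually_independent Pr (valid_idx P pi) Z) :
  {ae Pr, forall w : Omega,
    forall M : R, exists K : set ('M[R]_N * 'rV[R]_N),
      compact K /\
      (limn_esup (fun t => log_rate t (Qt P pi Z t w (~` K))) <= (- M)%:E)%E}.
Proof. exact: (main_ae HZ Hind). Qed.
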